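(* Let $K$ be a field, $D=K[x,y]$, and let $f,g\in D$ be polynomials with zero constant term which are coprime (equivalently, they form a regular sequence in $D_{(x,y)}$). Then for every sufficiently large integer $N$, we have $\frac{x}{(fg)^N}\in R(D)$ and $\frac{y}{(fg)^N}\in R(D)$.
   Context: For an integral domain $D$ with fraction field $F$, the reciprocal complement $R(D)$ is the subring of $F$ generated by all $1/d$, $d\in D\setminus\{0\}$; equivalently the set of all finite sums $\sum_i 1/d_i$ with $d_i\in D\setminus\{0\}$. *)

(* Defs.v *)
From HB Require Import structures.
From mathcomp Require Import all_boot all_order all_algebra.
From mathcomp Require Import fraction.
Set Implicit Arguments. Unset Strict Implicit. Unset Printing Implicit Defensive.
Import GRing.Theory.
Local Open Scope ring_scope.

(* The bivariate polynomial ring D = K[x,y] is represented as {poly {poly K}}: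
   x is the inner variable ('X%:P) and y is the outer variable 'X. *)
Definition bipoly (K : fieldType) := {poly {poly K}}.
Definition varx (K : fieldType) : bipoly K := ('X : {poly K})%:P.
Definition vary (K : fieldType) : bipoly K := 'X.

Definition const_term (K : fieldType) (f : bipoly K) : K := (f`_0)`_0.

Definition rdvd (R : comPzRingType) (h f : R) : Prop := exists q : R, f = h * q.

Definition rcoprime (R : comUnitRingType) (f g : R) : Prop :=
  forall h : R, rdvd h f -> rdvd h g -> h \is a GRing.unit.

Definition tofr (R : idomainType) (a : R) : {fraction R} := @FracField.tofrac R a.

(* The reciprocal complement R(D): the subring of Frac(D) generated by all
   1/d, d in D \ {0}; i.e. r lies in every subring of Frac(D) containing
   every 1/d. *)
Definition recip_compl (R : idomainType) : {fraction R} -> Prop :=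
  fun r => forall S : {pred {fraction R}},
    subring_closed S ->
    (forall d : R, d != 0 -> (tofr d)^-1 \in S) ->
    r \in S.

(* Main.v *)
Require Import Defs.
From HB Require Import structures.
From mathcomp Require Import all_boot all_order all_algebra.
From mathcomp Require Import fraction.
From Stdlib Require Import Classical.
From mathcomp Require Import zify.
From mathcomp Require Import ring.
Set Implicit Arguments. Unset Strict Implicit. Unset Printing Implicit Defensive.
Import GRing.Theory.
Local Open Scope ring_scope.

Section RC.
Variable R : idomainType.
Implicit Types x y : {fraction R}.
Local Notation F := {fraction R}.

Lemma tofrM (a b : R) : tofr (a * b) = tofr a * tofr b.
Proof. exact: rmorphM. Qed.
Lemma tofrX (a : R) n : tofr (a ^+ n) = tofr a ^+ n.
Proof. exact: rmorphXn. Qed.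
Lemma tofr_eq0 (a : R) : (tofr a == 0) = (a == 0).
Proof. exact: tofrac_eq0. Qed.

Lemma rc_inv (d : R) : d != 0 -> recip_compl (tofr d)^-1.
Proof. by move=> nd S _ HS; apply: HS. Qed.
Lemma rc1 : @recip_compl R 1.
Proof. by move=> S [] . Qed.
Lemma rcB x y : recip_compl x -> recip_compl y -> recip_compl (x - y).
Proof. by move=> hx hy S hS hd; case: (hS) => _ hB _; apply: hB; [apply: hx|apply: hy]. Qed.
Lemma rcM x y : recip_compl x -> recip_compl y -> recip_compl (x * y).
Proof. by move=> hx hy S hS hd; case: (hS) => _ _ hM; apply: hM; [apply: hx|apply: hy]. Qed.
Lemma rc0 : @recip_compl R 0.
Proof. by rewrite -(subrr 1); apply: rcB; apply: rc1. Qed.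
Lemma rcN x : recip_compl x -> recip_compl (- x).
Proof. by move=> hx; rewrite -sub0r; apply: rcB => //; apply: rc0. Qed.
Lemma rcD x y : recip_compl x -> recip_compl y -> recip_compl (x + y).
Proof. by move=> hx hy; rewrite -[y]opprK; apply: rcB => //; apply: rcN. Qed.
Lemma rc_sum (I : finType) (G : I -> F) : (forall i, recip_compl (G i)) -> recip_compl (\sum_i G i).
Proof.
move=> h; elim/big_rec: _ => [|i x _ hx]; first exact: rc0.
by apply: rcD.
Qed.
End RC.

Section PA.
Variable K : fieldType.
Local Notation A := {poly K}.

Definition primeA (p : A) := (1 < size p)%N /\ forall a b : A, p %| a * b -> (p %| a) || (p %| b).

Lemma ex_primeA (c : A) : (1 < size c)%N -> exists p, primeA p /\ p %| c.
Proof.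
move=> hc.
suff H : forall n (c : A), (size c <= n)%N -> (1 < size c)%N ->
    exists p, primeA p /\ p %| c by apply: (H _ c (leqnn _)).
elim=> [|n IH] {hc}c hn hc; first by move: hn; rewrite leqn0 => /eqP h; rewrite h in hc.
case: (classic (exists d : A, [/\ (1 < size d)%N, (size d < size c)%N & d %| c])).
  move=> [d [d1 d2 dc]].
  have [p [pp pd]] := IH d (leq_trans (leq_trans d2 hn) (leqnn _)) d1.
  - by exists p; split=> //; apply: dvdp_trans dc.
move=> nex; exists c; split=> //; split=> //.
set p := c; have sp : size p = size c by [].
have mmin : forall d : A, (1 < size d)%N -> d %| c -> (size c <= size d)%N.
  by move=> d d1 dc; rewrite leqNgt; apply/negP => dlt; apply: nex; exists d.
have pc : p %| c by [].
move=> a b pab; apply/orP.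
have [pa|npa] := boolP (p %| a); first by left.
right.
have cop : coprimep p a.
  rewrite /coprimep; set d := gcdp p a.
  have dp : d %| p by apply: dvdp_gcdl.
  have da : d %| a by apply: dvdp_gcdr.
  have pn0 : p != 0 by rewrite -size_poly_gt0 sp ltnW.
  have dn0 : d != 0 by apply: contraNneq pn0 => d0; move: dp; rewrite d0 dvd0p.
  have [d1|d1] := leqP (size d) 1.
    by rewrite eqn_leq d1 /= size_poly_gt0.
  have : (size c <= size d)%N by apply: mmin => //; apply: dvdp_trans pc.
  move=> hm.
  have : (size d <= size p)%N by apply: dvdp_leq.
  rewrite sp => hm2.
  have : size d == size p by rewrite sp eqn_leq hm hm2.
  rewrite (dvdp_size_eqp dp) => /eqp_dvdl eq.
  by move: npa; rewrite -eq da.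
by rewrite -(Gauss_dvdpl b cop) mulrC.
Qed.
End PA.

Section PD.
Variable K : fieldType.
Local Notation A := {poly K}.
Local Notation D := {poly {poly K}}.

Lemma cdvdP (p : A) (w : D) : p != 0 -> rdvd p%:P w <-> (forall i, p %| w`_i).
Proof.
move=> p0; split.
  by move=> [q ->] i; rewrite coefCM dvdp_mulr.
move=> h; exists (\poly_(i < size w) (w`_i %/ p)).
apply/polyP=> i; rewrite coefCM coef_poly.
case: ltnP => hi; first by rewrite mulrC divpK.
by rewrite nth_default // mulr0.
Qed.

Lemma primeA_neq0 (p : A) : primeA p -> p != 0.
Proof. by case=> h _; rewrite -size_poly_gt0 ltnW. Qed.

Lemma gaussD (p : A) (u v : D) : primeA p -> rdvd p%:P (u * v) -> rdvd p%:P u \/ rdvd p%:P v.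
Proof.
move=> pp; have p0 := primeA_neq0 pp; rewrite !cdvdP //.
move=> h; apply: NNPP => hn.
have [hu hv] : (exists i, ~~ (p %| u`_i)) /\ (exists j, ~~ (p %| v`_j)).
  split; apply: NNPP => hx; apply: hn; [left|right] => i; apply: NNPP => hi;
  by apply: hx; exists i; apply/negP.
case: (ex_minnP hu) => i0 hi0 mi; case: (ex_minnP hv) => j0 hj0 mj.
have := h (i0 + j0)%N; rewrite coefM (bigD1 (Ordinal (ltn_addr j0 (ltnSn i0)))) //= addKn.
rewrite dvdp_addl; last first.
  elim/big_rec: _ => [|k x hk hx]; first exact: dvdp0.
  apply: dvdp_add => //.
  have [lt|ge] := ltnP k i0.
    have : p %| u`_k by apply: NNPP => hk2; have := mi k (introT negP hk2); rewrite leqNgt lt.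
    by move=> pu; rewrite dvdp_mulr.
  have lt : (i0 < k)%N by rewrite ltn_neqAle ge andbT eq_sym; apply: contra hk => /eqP e; apply/eqP/val_inj.
  have : p %| v`_(i0 + j0 - k) by apply: NNPP => hk2; have := mj _ (introT negP hk2); rewrite leqNgt; apply/negP/negPn; rewrite ltn_subLR ?ltn_add2r //; have := ltn_ord k; rewrite ltnS.
  by move=> pv; rewrite dvdp_mull.
move=> hd; case/orP: (pp.2 _ _ hd); by [rewrite (negPf hi0) | rewrite (negPf hj0)].
Qed.
End PD.

Section G2.
Variable K : fieldType.
Local Notation A := {poly K}.
Local Notation D := {poly {poly K}}.
Implicit Types (f g h u v w d : D) (c p : A).

Lemma ctM u v : const_term (u * v) = const_term u * const_term v.
Proof. by rewrite /const_term !coef0M. Qed.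
Lemma ctC p : const_term (p%:P : D) = p`_0.
Proof. by rewrite /const_term coefC. Qed.

Lemma unitA_size p : p \is a GRing.unit -> size p = 1%N.
Proof. by rewrite poly_unitE => /andP[/eqP]. Qed.
Lemma unitC_size p : (p%:P : D) \is a GRing.unit -> size p = 1%N.
Proof. by rewrite poly_unitE coefC /= => /andP[_]; apply: unitA_size. Qed.
Lemma unitD_size u : u \is a GRing.unit -> size u = 1%N.
Proof. by rewrite poly_unitE => /andP[/eqP]. Qed.

Lemma rdvd_trans u v w : rdvd u v -> rdvd v w -> rdvd u w.
Proof. by move=> [a ->] [b ->]; exists (a * b); rewrite mulrA. Qed.
Lemma rdvd_refl u : rdvd u u.
Proof. by exists 1; rewrite mulr1. Qed.
Lemma rdvd_mulr u v : rdvd u (u * v).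
Proof. by exists v. Qed.

Lemma rcoprime_sym f g : rcoprime f g -> rcoprime g f.
Proof. by move=> H h a b; apply: H. Qed.
Lemma rcoprime_dvd f f' g : rcoprime f g -> rdvd f' f -> rcoprime f' g.
Proof. by move=> H d h hf hg; apply: H => //; apply: rdvd_trans d. Qed.

Lemma cancelC p u v : p != 0 -> p%:P * u = p%:P * v -> u = v.
Proof. by move=> p0; apply: mulfI; rewrite polyC_eq0. Qed.

Lemma primeC_nunit p : primeA p -> ~ (p%:P : D) \is a GRing.unit.
Proof. by move=> [s _] /unitC_size e; rewrite e in s. Qed.

Lemma gaussX p (g v : D) a : primeA p -> rdvd p%:P (g ^+ a * v) -> rdvd p%:P g \/ rdvd p%:P v.
Proof.
move=> pp; elim: a => [|a IH]; first by rewrite expr0 mul1r; right.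
rewrite exprS -mulrA => /(gaussD pp) [|]; first by left.
exact: IH.
Qed.

Lemma size_lt_mul p c : (1 < size p)%N -> c != 0 -> (size c < size (p * c)%R)%N.
Proof.
move=> sp c0; have p0 : p != 0 by rewrite -size_poly_gt0 (ltnW sp).
rewrite size_mul //; have := size_poly_gt0 c; rewrite c0 => hc.
move: sp hc; case: (size p) => [|[|m]] //; case: (size c) => [|k] // _ _.
by rewrite !addSn /= addnS ltnS; apply: leq_addl.
Qed.

Lemma lemC (g : D) a : forall n c f v, (size c + size (lead_coef f) <= n)%N ->
  c != 0 -> rcoprime f g -> const_term f = 0 -> const_term v != 0 ->
  rdvd f (g ^+ a * v) -> rdvd f (c%:P * v) -> False.
Proof.
elim=> [|n IH] c f v hn c0 hcop hf hv h1 [q hq].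
  by move: hn; rewrite leqn0 addn_eq0 size_poly_eq0 (negPf c0).
have [c00|c00] := eqVneq c`_0 0; last first.
  by move: (congr1 (@const_term K) hq); rewrite !ctM hf ctC mul0r => /eqP; rewrite mulf_eq0 (negPf c00) (negPf hv).
have f0 : f != 0.
  apply: contraNneq hv => f0; move: hq; rewrite f0 mul0r => /eqP.
  by rewrite mulf_eq0 polyC_eq0 (negPf c0) /= => /eqP ->; rewrite /const_term coef0 coef0.
have c1 : (1 < size c)%N.
  rewrite ltnNge; apply/negP => /size1_polyC e; by move: c0; rewrite e c00 polyC0 eqxx.
have [p [pp pc]] := ex_primeA c1.
have p0 := primeA_neq0 pp.
have ec : c = c %/ p * p by rewrite divpK.
set c' := c %/ p in ec.
have c'0 : c' != 0 by apply: contraNneq c0 => e; rewrite ec e mul0r.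
have [pf|pq] : rdvd p%:P f \/ rdvd p%:P q.
  by apply: gaussD => //; rewrite -hq ec (mulrC c') rmorphM -mulrA; apply: rdvd_mulr.
- case: pf => f' ef.
  have := h1; rewrite ef => -[q1 hq1].
  have [pg|pv] := gaussX pp (ex_intro _ _ (etrans hq1 (esym (mulrA _ _ _)))).
    by apply: (primeC_nunit pp); apply: hcop pg; exists f'.
  case: pv => v' ev.
  have pc0 : p`_0 != 0 by move: hv; rewrite ev ctM ctC mulf_eq0 negb_or => /andP[].
  have f'0 : const_term f' = 0 by move: hf; rewrite ef ctM ctC => /eqP; rewrite mulf_eq0 (negPf pc0) => /eqP.
  have v'0 : const_term v' != 0 by move: hv; rewrite ev ctM ctC mulf_eq0 negb_or => /andP[].
  apply: (IH c f' v') => //.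
  + rewrite -ltnS (leq_trans _ hn) // ltn_add2l ef lead_coefM lead_coefC.
    have f'n0 : f' != 0 by apply: contraNneq f0 => e; rewrite ef e mulr0.
    by apply: size_lt_mul; [case: pp|rewrite lead_coef_eq0].
  + by apply: rcoprime_dvd hcop _; exists p%:P; rewrite ef mulrC.
  + by exists q1; apply: (cancelC p0); rewrite mulrCA -ev hq1 mulrA.
  + exists q; apply: (cancelC p0); rewrite mulrCA -ev hq ef mulrA.
    by [].
case: pq => q' eq'.
apply: (IH c' f v) => //.
- rewrite -ltnS (leq_trans _ hn) // ltn_add2r ec mulrC.
  by apply: size_lt_mul; [case: pp|].
- by exists q'; apply: (cancelC p0); rewrite [RHS]mulrCA -eq' -hq mulrA -rmorphM (mulrC p) -ec.
Qed.

Lemma lemD1 f : forall n c d, (size c <= n)%N -> c != 0 -> (1 < size d)%N ->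
  rdvd d (c%:P * f) -> exists d', [/\ size d' = size d, rdvd d' d & rdvd d' f].
Proof.
elim=> [|n IH] c d hn c0 hd [q hq].
  by move: hn; rewrite leqn0 size_poly_eq0 (negPf c0).
have [c1|c1] := leqP (size c) 1.
  exists d; split=> //; first exact: rdvd_refl.
  have ec := size1_polyC c1; set k := c`_0 in ec.
  have k0 : k != 0 by move: c0; rewrite ec polyC_eq0.
  exists (k^-1%:P%:P * q); rewrite mulrCA -hq ec mulrA -!rmorphM.
  by rewrite mulVf // !rmorph1 mul1r.
have [p [pp pc]] := ex_primeA c1.
have p0 := primeA_neq0 pp.
have ec : c = c %/ p * p by rewrite divpK.
set c' := c %/ p in ec.
have c'0 : c' != 0 by apply: contraNneq c0 => e; rewrite ec e mul0r.
have hn' : (size c' <= n)%N.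
  rewrite -ltnS (leq_trans _ hn) // ec mulrC; apply: size_lt_mul => //; by case: pp.
have [pd|pq] : rdvd p%:P d \/ rdvd p%:P q.
  by apply: gaussD => //; rewrite -hq ec (mulrC c') rmorphM -mulrA; apply: rdvd_mulr.
  case: pd => d2 ed.
  have sd2 : size d2 = size d by rewrite ed size_Cmul.
  have [d' [s1 h1 h2]] : exists d', [/\ size d' = size d2, rdvd d' d2 & rdvd d' f].
    apply: (IH c' d2) => //; first by rewrite sd2.
    by exists q; apply: (cancelC p0); rewrite [RHS]mulrA -ed -hq [LHS]mulrA -rmorphM (mulrC p) -ec.
  exists d'; split=> //; first by rewrite s1.
  by apply: rdvd_trans h1 _; exists p%:P; rewrite ed mulrC.
case: pq => q' eq'.
apply: (IH c' d) => //.
by exists q'; apply: (cancelC p0); rewrite [RHS]mulrCA -eq' -hq [LHS]mulrA -rmorphM (mulrC p) -ec.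
Qed.

Lemma unit_size1 u : u \is a GRing.unit -> (size u <= 1)%N.
Proof. by move/unitD_size => ->. Qed.

Lemma bezoutD f g : rcoprime f g -> f != 0 -> g != 0 ->
  exists s t (r : A), r != 0 /\ s * f + t * g = r%:P.
Proof.
move=> hc f0 g0.
have [f1|f1] := leqP (size f) 1.
  exists 1, 0, f`_0; split; last by rewrite mul1r mul0r addr0 -size1_polyC.
  by move: f0; rewrite {1}(size1_polyC f1) polyC_eq0.
have [g1|g1] := leqP (size g) 1.
  exists 0, 1, g`_0; split; last by rewrite mul1r mul0r add0r -size1_polyC.
  by move: g0; rewrite {1}(size1_polyC g1) polyC_eq0.
have [[s t] /= _ e] := resultant_in_ideal f1 g1.
have [r0|r0] := eqVneq (resultant f g) 0; last by exists s, t, (resultant f g).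
exfalso; move: r0 => /eqP; rewrite resultant_eq0 => hd.
have := Pdiv.Idomain.dvdp_gcdl f g; move/Pdiv.Idomain.dvdpP => [[c1 q1] /= c10 e1].
have := Pdiv.Idomain.dvdp_gcdr f g; move/Pdiv.Idomain.dvdpP => [[c2 q2] /= c20 e2].
set d := Pdiv.Idomain.gcdp f g in hd e1 e2.
have [d1 [s1 h1 h2]] : exists d', [/\ size d' = size d, rdvd d' d & rdvd d' f].
  by apply: (lemD1 (leqnn _) c10 hd); exists q1; rewrite mul_polyC e1 mulrC.
have [d3 [s3 h3 h4]] : exists d', [/\ size d' = size d1, rdvd d' d1 & rdvd d' g].
  apply: (lemD1 (leqnn _) c20); first by rewrite s1.
  by apply: rdvd_trans h1 _; exists q2; rewrite mul_polyC e2 mulrC.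
have := hc d3 (rdvd_trans h3 h2) h4.
by move/unitD_size; rewrite s3 s1 => e3; rewrite e3 in hd.
Qed.

Lemma ct_unit u : u \is a GRing.unit -> const_term u != 0.
Proof.
rewrite poly_unitE => /andP[_]; rewrite poly_unitE => /andP[_].
by rewrite /const_term; apply: contraTneq => ->; rewrite unitr0.
Qed.

Lemma lemE f g v a : rcoprime f g -> const_term f = 0 -> const_term v != 0 ->
  rdvd f (g ^+ a * v) -> False.
Proof.
move=> hc hf hv [q hq].
have v0 : v != 0 by apply: contraNneq hv => ->; rewrite /const_term !coef0.
have g0 : g != 0.
  apply/negP => /eqP g0; have := hc f (rdvd_refl f); rewrite g0.
  by move=> /(_ (ex_intro _ 0 (esym (mulr0 f)))) /ct_unit; rewrite hf eqxx.
have f0 : f != 0.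
  apply/negP => /eqP f0; move: hq; rewrite f0 mul0r => /eqP.
  by rewrite mulf_eq0 expf_eq0 (negPf g0) (negPf v0) andbF.
have [s [t [r [r0 hr]]]] := bezoutD hc f0 g0.
apply: (lemC (leqnn _) (expf_neq0 a r0) hc hf hv (ex_intro _ q hq)).
have e := subrXX (s * f + t * g) (t * g) a.
rewrite addrK in e.
exists ((s * \sum_(i < a) (s * f + t * g) ^+ (a.-1 - i) * (t * g) ^+ i) * v + t ^+ a * q).
rewrite mulrDr (mulrCA f (t ^+ a)) -hq !mulrA -exprMn -mulrDl (mulrC f s) -e subrK.
by rewrite rmorphXn /= -hr.
Qed.
End G2.
Section Ev.
Variable K : fieldType.
Variable B : comNzRingType.
Variable iota : {rmorphism K -> B}.
Variables a b : B.
Lemma cf1 : commr_rmorph iota a. Proof. by move=> x; exact: mulrC. Qed.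
Definition evS : {poly K} -> B := horner_morph cf1.
Lemma cf2 : commr_rmorph evS b. Proof. by move=> x; exact: mulrC. Qed.
Definition ev2 : {poly {poly K}} -> B := horner_morph cf2.
End Ev.

Section EvMap.
Variable K : fieldType.
Variables B B' : comNzRingType.
Variable iota : {rmorphism K -> B}.
Variable iota' : {rmorphism K -> B'}.
Variable phi : {rmorphism B -> B'}.
Hypothesis hphi : forall k, phi (iota k) = iota' k.

Lemma evS_map a p : phi (evS iota a p) = evS iota' (phi a) p.
Proof.
rewrite /evS /horner_morph -horner_map -map_poly_comp.
by congr (_.[_]); apply: eq_map_poly => k /=; rewrite hphi.
Qed.

Lemma ev2_map a b P : phi (ev2 iota a b P) = ev2 iota' (phi a) (phi b) P.
Proof.
rewrite /ev2 /horner_morph -horner_map -map_poly_comp.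
by congr (_.[_]); apply: eq_map_poly => p /=; rewrite -evS_map.
Qed.
End EvMap.

Lemma low (R : idomainType) (P : {poly R}) : P != 0 ->
  exists k (P' : {poly R}), P = 'X ^+ k * P' /\ P'`_0 != 0.
Proof.
move: {2}(size P) (leqnn (size P)) => n; elim: n P => [|n IH] P hn P0.
  by move: hn; rewrite leqn0 size_poly_eq0 (negPf P0).
have [c0|c0] := eqVneq P`_0 0; last by exists 0%N, P; rewrite expr0 mul1r.
have : root P 0 by rewrite /root horner_coef0 c0.
case/factor_theorem => Q; rewrite subr0 => eQ.
have Q0 : Q != 0 by apply: contraNneq P0 => e; rewrite eQ e mul0r.
have [k [P' [e1 e2]]] : exists k (P' : {poly R}), Q = 'X ^+ k * P' /\ P'`_0 != 0.
  apply: IH => //; rewrite -ltnS (leq_trans _ hn) // eQ size_mulX //.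
by exists k.+1, P'; split=> //; rewrite eQ e1 exprSr mulrAC.
Qed.

Section AI.
Variable K : fieldType.
Local Notation A := {poly K}.
Local Notation D := {poly {poly K}}.
Definition iD : {rmorphism K -> D} := polyC \o polyC.
Definition ctm : {rmorphism D -> K} := horner_eval 0 \o horner_eval 0.
Lemma ctmE (u : D) : ctm u = const_term u.
Proof. by rewrite /ctm /= /horner_eval !horner_coef0. Qed.

Lemma rcoprime_neq0 (f g : D) : rcoprime f g -> const_term f = 0 -> g != 0.
Proof.
move=> hc hf; apply/negP => /eqP g0; have := hc f (rdvd_refl f); rewrite g0.
by move=> /(_ (ex_intro _ 0 (esym (mulr0 f)))) /ct_unit; rewrite hf eqxx.
Qed.

Lemma alg_indep (f g : D) (P : {poly {poly K}}) : rcoprime f g -> const_term f = 0 ->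
  const_term g = 0 -> P != 0 -> ev2 iD f g P != 0.
Proof.
move=> hc hf hg P0; apply/eqP => he.
have g0 := rcoprime_neq0 hc hf.
have [k [P' [eP hP']]] := low P0.
have e1 : ev2 iD f g P' = 0.
  move: he; rewrite eP /ev2 rmorphM rmorphXn /= horner_morphX => /eqP.
  by rewrite mulf_eq0 expf_eq0 (negPf g0) andbF /= => /eqP.
have : root (P' - (P'`_0)%:P) 0 by rewrite /root hornerD hornerN hornerC horner_coef0 subrr.
case/factor_theorem => Q; rewrite subr0 => eQ.
have eP' : P' = (P'`_0)%:P + Q * 'X by rewrite -eQ addrC subrK.
move: e1; rewrite eP' /ev2 rmorphD rmorphM /= horner_morphC horner_morphX => e1.
have [k2 [A1 [eA hA1]]] := low hP'.
apply: (lemE (v:=evS iD f A1) (a:=k2) (rcoprime_sym hc) hg).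
  rewrite -ctmE (evS_map (iota' := (idfun : {rmorphism K -> K}))); last first.
    by move=> c; rewrite /ctm /= /horner_eval !hornerC.
  by rewrite ctmE hf /evS /horner_morph map_poly_id // horner_coef0.
have e2 : evS iD f (P'`_0) = - (ev2 iD f g Q * g).
  by apply/eqP; rewrite -addr_eq0; apply/eqP; exact: e1.
exists (- ev2 iD f g Q); rewrite mulrN [g * _]mulrC -e2 eA /evS rmorphM rmorphXn /= horner_morphX.
by [].
Qed.
End AI.

Lemma size_map_leq (R S : nzRingType) (f : R -> S) (p : {poly R}) : (size (map_poly f p) <= size p)%N.
Proof. exact: size_poly. Qed.

Lemma evS_sum (K : fieldType) (B : comNzRingType) (iota : {rmorphism K -> B}) a (p : {poly K}) n :
  (size p <= n)%N -> evS iota a p = \sum_(i < n) iota p`_i * a ^+ i.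
Proof.
move=> hn; rewrite /evS /horner_morph (horner_coef_wide _ (leq_trans (size_map_leq _ _) hn)).
by apply: eq_bigr => i _; rewrite coef_map.
Qed.

Lemma ev2_sum (K : fieldType) (B : comNzRingType) (iota : {rmorphism K -> B}) (a b : B) (P : {poly {poly K}}) n :
  (size P <= n)%N -> (forall j, leq (size P`_j) n) ->
  ev2 iota a b P = \sum_(j < n) \sum_(i < n) iota (P`_j`_i) * a ^+ i * b ^+ j.
Proof.
move=> hn hj; rewrite /ev2 /horner_morph (horner_coef_wide _ (leq_trans (size_map_leq _ _) hn)).
apply: eq_bigr => j _; rewrite coef_map /= -/(evS iota a P`_j) (evS_sum _ _ (hj j)) mulr_suml.
by [].
Qed.

Section LA.
Variable K : fieldType.
Local Notation A := {poly K}.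
Definition iA : {rmorphism K -> A} := polyC.

Lemma dep2 (a b : A) : exists P : {poly {poly K}}, P != 0 /\ ev2 iA a b P = 0.
Proof.
set m := (size a + size b)%N; set n := m.+2; set d := (m * n).+1.
pose T := ('I_n * 'I_n)%type.
pose e (r : 'I_#|{: T}|) : T := enum_val r.
pose M : 'M[K]_(#|{: T}|, d) := \matrix_(r, l) (a ^+ (e r).1 * b ^+ (e r).2)`_l.
have cT : #|{: T}| = (n * n)%N by rewrite card_prod !card_ord.
have rk : (0 < \rank (kermx M))%N.
  rewrite mxrank_ker subn_gt0 (leq_ltn_trans (rank_leq_col M)) // cT /d /n; nia.
have [r hr] : exists r, row r (kermx M) != 0.
  apply/existsP; move: rk; rewrite lt0n mxrank_eq0; apply: contraR => /existsPn h.
  by apply/eqP/row_matrixP => r; rewrite row0; apply/eqP/negPn/h.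
set u := row r (kermx M) in hr.
have uM : u *m M = 0 by rewrite -row_mul mulmx_ker row0.
pose c (i j : 'I_n) := u 0 (enum_rank (i, j)).
exists (\poly_(j < n) \poly_(i < n) c (inord i) (inord j)); split.
  have [k hk] : exists k, u 0 k != 0.
    by apply/existsP; move: hr; apply: contraR => /existsPn h; apply/eqP/rowP => k; rewrite [RHS]mxE; apply/eqP; have := h k; rewrite negbK.
  set p : T := enum_val k.
  apply/eqP => /(congr1 (fun P : {poly {poly K}} => P`_p.2`_p.1)) /eqP.
  rewrite coef_poly ltn_ord coef_poly ltn_ord /c !inord_val -surjective_pairing enum_valK.
  by rewrite !coef0 (negPf hk).
rewrite (@ev2_sum _ _ _ _ _ _ n); first last.
- by move=> j; rewrite coef_poly; case: ifP => _; [apply: size_poly|rewrite size_poly0].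
- exact: size_poly.
under eq_bigr => j _ do under eq_bigr => i _ do rewrite coef_poly ltn_ord coef_poly ltn_ord !inord_val.
rewrite exchange_big pair_bigA /= (big_enum_val (fun p : T => iA (c p.1 p.2) * a ^+ p.1 * b ^+ p.2)) /=.
apply/polyP => l; rewrite coef_sum coef0.
have [ld|ld] := ltnP l d.
  have := congr1 (fun N : 'rV[K]_d => N 0 (Ordinal ld)) uM; rewrite /= !mxE => e0; rewrite -[X in _ = X]e0.
  apply: eq_bigr => k _; rewrite -mulrA coefCM /c -surjective_pairing enum_valK mxE.
  by congr (_ * _); rewrite /M mxE.
rewrite big1 // => k _; rewrite -mulrA coefCM nth_default ?mulr0 //.
apply: leq_trans ld; apply: leq_trans (size_polyMleq _ _) _.
have h1 := size_poly_exp_leq a (e k).1; have h2 := size_poly_exp_leq b (e k).2.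
have i1 := ltn_ord (e k).1; have i2 := ltn_ord (e k).2.
have s1 : ((size a).-1 * (e k).1 <= size a * n)%N.
  by apply: leq_mul; [apply: leq_pred|apply: ltnW].
have s2 : ((size b).-1 * (e k).2 <= size b * n)%N.
  by apply: leq_mul; [apply: leq_pred|apply: ltnW].
rewrite /d /m mulnDl; move: h1 h2 s1 s2.
move: (size (a ^+ (e k).1)) (size (b ^+ (e k).2)) => x y; lia.
Qed.
End LA.


Lemma frac_aux (F : fieldType) (c x y : F) (i j N : nat) : x != 0 -> y != 0 -> (i <= N)%N -> (j <= N)%N ->
  c * x ^+ i * y ^+ j / (x * y) ^+ N = c * (x ^+ (N - i) * y ^+ (N - j))^-1.
Proof.
move=> x0 y0 hi hj.
have -> : (x * y) ^+ N = (x ^+ i * y ^+ j) * (x ^+ (N - i) * y ^+ (N - j)).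
  by rewrite exprMn mulrACA -!exprD !subnKC.
by field; rewrite ?mulf_neq0 ?expf_neq0.
Qed.

Lemma div_aux (F : fieldType) (x y w : F) : y != 0 -> x / w = y^-1 * (x * y / w).
Proof. by move=> y0; rewrite mulrA mulrCA mulVf // mulr1. Qed.

Section MB.
Variable K : fieldType.
Local Notation D := {poly {poly K}}.
Local Notation F := (tofr (R:=D)).
Local Notation iD := (iD K).

Definition csz (P : {poly {poly K}}) (j : nat) := size P`_j.
Definition bnd (P : {poly {poly K}}) := (size P + \sum_(j < size P) csz P j)%N.
Lemma bnd1 (P : {poly {poly K}}) : (size P <= bnd P)%N. Proof. exact: leq_addr. Qed.
Lemma bnd2 (P : {poly {poly K}}) j : leq (size P`_j) (bnd P).
Proof.
have [jl|jg] := ltnP j (size P); first last.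
  by rewrite nth_default // size_poly0.
apply: leq_trans (leq_addl _ _); rewrite (bigD1 (Ordinal jl)) //=; exact: leq_addr.
Qed.

Lemma iDE (k : K) : iD k = k%:P%:P. Proof. by []. Qed.
Definition phiK : {rmorphism K -> {fraction D}} := (@FracField.tofrac D) \o iD.
Lemma phiKE k : phiK k = F (iD k). Proof. by []. Qed.

Lemma rc_const (k : K) : recip_compl (F (iD k)).
Proof.
rewrite -phiKE; have [->|k0] := eqVneq k 0; first by rewrite rmorph0; apply: rc0.
rewrite -[k]invrK fmorphV; apply: rc_inv.
by rewrite iDE !polyC_eq0 invr_eq0.
Qed.

Lemma memb (f g z q : D) (P : {poly {poly K}}) N : f != 0 -> g != 0 -> q != 0 ->
  ev2 iD f g P = z * q -> (bnd P <= N)%N ->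
  recip_compl (F z / F ((f * g) ^+ N)).
Proof.
move=> f0 g0 q0 he hN.
have Fq : F q != 0 by rewrite tofr_eq0.
have Ff : F f != 0 by rewrite tofr_eq0.
have Fg : F g != 0 by rewrite tofr_eq0.
have -> : F z / F ((f * g) ^+ N) = (F q)^-1 * (F (ev2 iD f g P) / F ((f * g) ^+ N)).
  by rewrite he tofrM; exact: (@div_aux _ _ _ _ Fq).
apply: rcM; first by apply: rc_inv.
rewrite (@ev2_sum _ _ _ _ _ _ N); first last.
- by move=> j; apply: leq_trans (bnd2 P j) hN.
- by apply: leq_trans (bnd1 P) hN.
rewrite /tofr rmorph_sum /= mulr_suml; apply: rc_sum => j.
rewrite rmorph_sum /= mulr_suml; apply: rc_sum => i.
rewrite !(rmorphXn, rmorphM) /= frac_aux ?tofr_eq0 // -?rmorphXn -?rmorphM; first last.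
- by apply: ltnW; apply: leq_trans (ltn_ord j) _.
- by apply: ltnW; apply: leq_trans (ltn_ord i) _.
apply: rcM; first exact: rc_const.
by apply: rc_inv; rewrite mulf_neq0 // expf_neq0.
Qed.
End MB.

Section Final.
Variable K : fieldType.
Local Notation A := {poly K}.
Local Notation D := {poly {poly K}}.
Local Notation iD := (iD K).

Definition hev : {rmorphism D -> A} := horner_eval 0.

Lemma lemY (f g : D) : const_term f = 0 -> const_term g = 0 -> rcoprime f g ->
  exists P q, q != 0 /\ ev2 iD f g P = vary K * q.
Proof.
move=> hf hg hc.
have [P [P0 hP]] := dep2 (hev f) (hev g).
have e : hev (ev2 iD f g P) = 0.
  rewrite (ev2_map (iota' := iA K)) // => k.
  by rewrite /hev /= /horner_eval hornerC.
have w0 := alg_indep hc hf hg P0.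
have : root (ev2 iD f g P) 0 by rewrite /root; apply/eqP; exact: e.
case/factor_theorem => q; rewrite subr0 => eq.
exists P, q; split; last by rewrite eq mulrC.
by apply: contraNneq w0 => q0; rewrite eq q0 mul0r.
Qed.

Definition sw : {rmorphism D -> D} := swapXY.

Lemma sw_iD k : sw (iD k) = iD k.
Proof. by rewrite /sw /= swapXY_polyC map_polyC. Qed.

Lemma swK (u : D) : sw (sw u) = u.
Proof. exact: swapXYK. Qed.

Lemma ct_sw (u : D) : const_term (sw u) = const_term u.
Proof. by rewrite /const_term /sw /= coef_swapXY. Qed.

Lemma rcoprime_sw (f g : D) : rcoprime f g -> rcoprime (sw f) (sw g).
Proof.
move=> hc h [a ea] [b eb].
have : sw h \is a GRing.unit.
  apply: hc; [exists (sw a) | exists (sw b)]; by rewrite -rmorphM -?ea -?eb swK.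
by move/(rmorph_unit sw); rewrite swK.
Qed.

Lemma lemX (f g : D) : const_term f = 0 -> const_term g = 0 -> rcoprime f g ->
  exists P q, q != 0 /\ ev2 iD f g P = varx K * q.
Proof.
move=> hf hg hc.
have [P [q [q0 e]]] := lemY (f := sw f) (g := sw g) (etrans (ct_sw f) hf) (etrans (ct_sw g) hg) (rcoprime_sw hc).
exists P, (sw q); split; first by rewrite /sw /= swapXY_eq0.
have := congr1 sw e; rewrite (ev2_map (iota' := iD)); last exact: sw_iD.
rewrite (swK f) (swK g) => ->.
by rewrite rmorphM /= /vary swapXY_X.
Qed.
End Final.

Unset Implicit Arguments.

Theorem mainTheorem4 (K : fieldType) (f g : bipoly K) :
  const_term f = 0 -> const_term g = 0 -> rcoprime f g ->
  exists N0 : nat, forall N : nat, (N0 <= N)%N ->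
    recip_compl (tofr (varx K) / tofr ((f * g) ^+ N)) /\
    recip_compl (tofr (vary K) / tofr ((f * g) ^+ N)).
Proof.
move=> hf hg hc.
have g0 := rcoprime_neq0 hc hf.
have f0 := rcoprime_neq0 (rcoprime_sym hc) hg.
have [P1 [q1 [q10 e1]]] := lemX hf hg hc.
have [P2 [q2 [q20 e2]]] := lemY hf hg hc.
exists (maxn (bnd P1) (bnd P2)) => N hN; split.
- by apply: (memb f0 g0 q10 e1); apply: leq_trans hN; apply: leq_maxl.
- by apply: (memb f0 g0 q20 e2); apply: leq_trans hN; apply: leq_maxr.
Qed.
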